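(* For every integer $n\ge 1$, $7 P_{n}^2= -3 P_{n-1}^2+2 P_{n}P_{n-1}-4P_{n+1}^{2}-2 P_{2 n}+2 P_{n} P_{n+1} +3 P_{2 n-1}+4 P_{2 n+1}$, where $P_k$ denotes the $k$-th Pell number.
   Context: The Pell numbers are defined by $P_0=0$, $P_1=1$, $P_k=2P_{k-1}+P_{k-2}$ for $k\ge 2$. *)

(* Defs.v *)
From Stdlib Require Import ZArith.
Open Scope Z_scope.

Fixpoint pell (k : nat) : Z :=
  match k with
  | O => 0
  | S O => 1
  | S ((S k'') as k') => 2 * pell k' + pell k''
  end.

(* Main.v *)
Require Import Defs.
From Stdlib Require Import ZArith Lia.
Open Scope Z_scope.

Lemma pell_SS k : pell (S (S k)) = 2 * pell (S k) + pell k.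
Proof. reflexivity. Qed.

Lemma pell_add_aux m : forall n,
  pell (m + n + 1) = pell (m + 1) * pell (n + 1) + pell m * pell n /\
  pell (S m + n + 1) = pell (S m + 1) * pell (n + 1) + pell (S m) * pell n.
Proof.
  induction m as [|m IH]; intros n.
  - split.
    + replace (0 + n + 1)%nat with (n + 1)%nat by lia.
      change (pell (0+1)) with 1. change (pell 0) with 0. ring.
    + replace (1 + n + 1)%nat with (S (S n)) by lia. rewrite pell_SS.
      replace (n+1)%nat with (S n) by lia. change (pell (1+1)) with 2.
      change (pell 1) with 1. ring.
  - destruct (IH n) as [H1 H2]. split; [exact H2|].
    replace (S (S m) + n + 1)%nat with (S (S (m + n + 1))) by lia.
    rewrite pell_SS.
    replace (S (m + n + 1)) with (S m + n + 1)%nat by lia.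
    rewrite H2, H1.
    replace (S (S m) + 1)%nat with (S (S (m + 1))) by lia.
    rewrite pell_SS.
    replace (S (m + 1)) with (S m + 1)%nat by lia.
    replace (S (S m)) with (S (S m)) by lia.
    rewrite (pell_SS m).
    replace (S m + 1)%nat with (S (S m)) by lia.
    replace (m + 1)%nat with (S m) by lia.
    rewrite pell_SS. ring.
Qed.

Lemma pell_add m n :
  pell (m + n + 1) = pell (m + 1) * pell (n + 1) + pell m * pell n.
Proof. apply pell_add_aux. Qed.

Theorem proposition7p5 (n : nat) (hn : (1 <= n)%nat) :
  7 * pell n ^ 2 =
    - 3 * pell (n - 1) ^ 2 + 2 * pell n * pell (n - 1) - 4 * pell (n + 1) ^ 2
    - 2 * pell (2 * n) + 2 * pell n * pell (n + 1)
    + 3 * pell (2 * n - 1) + 4 * pell (2 * n + 1).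
Proof.
  destruct n as [|k]; [lia|].
  replace (2 * S k)%nat with (k + (k+1) + 1)%nat by lia.
  replace (k + (k + 1) + 1 - 1)%nat with (k + k + 1)%nat by lia.
  replace (k + (k + 1) + 1 + 1)%nat with ((k+1) + (k+1) + 1)%nat by lia.
  rewrite !pell_add.
  replace (S k - 1)%nat with k by lia.
  replace (S k + 1)%nat with (S (S k)) by lia.
  replace (k + 1 + 1)%nat with (S (S k)) by lia.
  replace (k + 1)%nat with (S k) by lia.
  rewrite pell_SS. change (pell (1+1)) with 2. change (pell 1) with 1. ring.
Qed.
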